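(* Let $\Gamma=(V,E)$ be a locally finite reflexive relation. If $F_1$ and $F_2$ are weak fragments of $\Gamma$ with $F_1\cap F_2\neq\emptyset$, then $F_1\cup F_2$ and $F_1\cap F_2$ are weak fragments. In particular, two distinct weak atoms are disjoint. Assume furthermore that $\Gamma$ is point-transitive. Then the weak atoms of $\Gamma$ form a partition of $V$, and for any weak atom $A$ the subrelation $\Gamma[A]$ induced on $A$ is point-transitive.
   Context: A relation is a pair $\Gamma=(V,E)$ with $E\subset V\times V$; for $X\subset V$, $\Gamma(X)=\{y: (x,y)\in E \text{ for some } x\in X\}$, $\Gamma^-(X)=\{y:(y,x)\in E\text{ for some }x\in X\}$, $\Gamma(x)=\Gamma(\{x\})$. $\Gamma$ is reflexive if $(x,x)\in E$ for all $x$, and locally finite if $\Gamma(x)$ and $\Gamma^-(x)$ are finite for all $x\in V$. Write $\partial(X)=\Gamma(X)\setminus X$. An automorphism is a bijection $f:V\to V$ with $\Gamma(f(x))=f(\Gamma(x))$ for all $x$; $\Gamma$ is point-transitive if for all $x,y\in V$ there is an automorphism $f$ with $f(x)=y$. The induced subrelation on $X$ is $\Gamma[X]=(X,(X\times X)\cap E)$. The weak connectivity is $\kappa(\Gamma)=\min\{|\partial(X)| : 1\le |X|<\infty\}$; a weak fragment is a set $X$ with $1\le|X|<\infty$ and $|\partial(X)|=\kappa(\Gamma)$; a weak atom is a weak fragment of minimum cardinality. *)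

(* Defs.v *)
From Stdlib Require Import List.
Import ListNotations.

Section Defs.
Context {V : Type}.

Definition has_card (X : V -> Prop) (n : nat) : Prop :=
  exists l : list V, NoDup l /\ length l = n /\ forall x, X x <-> In x l.

Definition finite_set (X : V -> Prop) : Prop := exists n, has_card X n.

Definition nonempty (X : V -> Prop) : Prop := exists x, X x.

Definition same_set (X Y : V -> Prop) : Prop := forall x, X x <-> Y x.

Definition disjoint (X Y : V -> Prop) : Prop := forall x, ~ (X x /\ Y x).

Definition setU (X Y : V -> Prop) : V -> Prop := fun x => X x \/ Y x.
Definition setI (X Y : V -> Prop) : V -> Prop := fun x => X x /\ Y x.

Variable E : V -> V -> Prop.

Definition image (X : V -> Prop) : V -> Prop := fun y => exists x, X x /\ E x y.

Definition boundary (X : V -> Prop) : V -> Prop := fun y => image X y /\ ~ X y.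

Definition reflexive_rel : Prop := forall x, E x x.

Definition locally_finite : Prop :=
  forall x, finite_set (fun y => E x y) /\ finite_set (fun y => E y x).

Definition weak_fragment (X : V -> Prop) : Prop :=
  nonempty X /\ finite_set X /\
  exists k, has_card (boundary X) k /\
    forall Y m, nonempty Y -> finite_set Y -> has_card (boundary Y) m -> k <= m.

Definition weak_atom (A : V -> Prop) : Prop :=
  weak_fragment A /\
  exists a, has_card A a /\
    forall F f, weak_fragment F -> has_card F f -> a <= f.

End Defs.

(* automorphism: bijection f with Γ(f x) = f(Γ(x)) for all x *)
Definition automorphism {W : Type} (E : W -> W -> Prop) (f : W -> W) : Prop :=
  (exists g : W -> W, (forall x, g (f x) = x) /\ (forall y, f (g y) = y)) /\
  forall x y, E (f x) y <-> exists z, E x z /\ y = f z.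

Definition point_transitive {W : Type} (E : W -> W -> Prop) : Prop :=
  forall x y : W, exists f, automorphism E f /\ f x = y.

Definition induced {V : Type} (E : V -> V -> Prop) (A : V -> Prop)
  : {x | A x} -> {x | A x} -> Prop :=
  fun a b => E (proj1_sig a) (proj1_sig b).

(* Main.v *)
Require Import Defs.
From Stdlib Require Import List Lia Classical ProofIrrelevance FinFun.
Import ListNotations.

Section S.
Context {V : Type}.
Implicit Types X Y : V -> Prop.

Lemma covered_finite X (l : list V) : (forall x, X x -> In x l) -> finite_set X.
Proof.
  revert X; induction l as [|a l IH]; intros X HX.
  - exists 0, []. split; [constructor|split; auto]. intro x; split; [intro H; destruct (HX _ H)| intros []].
  - destruct (IH (fun x => X x /\ x <> a)) as [n [l' [Hnd [Hlen Hin]]]].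
    { intros x [Hx Hne]. destruct (HX x Hx); [congruence|auto]. }
    destruct (classic (X a)) as [Ha|Ha].
    + exists (S n), (a :: l'). split; [|split].
      * constructor; auto. intro H. apply Hin in H. tauto.
      * simpl; lia.
      * intro x. split.
        -- intro Hx. destruct (classic (x = a)) as [->|Hne]; [left; auto| right; apply Hin; auto].
        -- intros [<-|H]; auto. apply Hin in H; tauto.
    + exists n, l'. split; [auto|split; auto]. intro x; split.
      * intro Hx. apply Hin. split; auto. intro; subst; tauto.
      * intro H; apply Hin in H; tauto.
Qed.

Lemma finite_sub X Y : finite_set Y -> (forall x, X x -> Y x) -> finite_set X.
Proof. intros [n [l [_ [_ H]]]] HXY. apply (covered_finite X l). intros x Hx. apply H, HXY, Hx. Qed.

Lemma finite_union X Y : finite_set X -> finite_set Y -> finite_set (setU X Y).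
Proof. intros [n [l [_ [_ H]]]] [m [l' [_ [_ H']]]]. apply (covered_finite _ (l ++ l')).
  intros x [Hx|Hx]; apply in_or_app; [left; apply H| right; apply H']; auto. Qed.

Lemma card_le X Y n m : (forall x, X x -> Y x) -> has_card X n -> has_card Y m -> n <= m.
Proof. intros HXY [l [Hnd [<- H]]] [l' [_ [<- H']]]. apply NoDup_incl_length; auto.
  intros x Hx. apply H', HXY, H, Hx. Qed.

Lemma card_unique X n m : has_card X n -> has_card X m -> n = m.
Proof. intros; apply PeanoNat.Nat.le_antisymm; eapply card_le; eauto. Qed.

Lemma card_eq_sub X Y n : (forall x, X x -> Y x) -> has_card X n -> has_card Y n ->
  forall x, Y x -> X x.
Proof. intros HXY [l [Hnd [Hl H]]] [l' [Hnd' [Hl' H']]] x Hy.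
  apply H. apply (@NoDup_length_incl _ l l' Hnd); [lia| |].
  - intros z Hz. apply H', HXY, H, Hz.
  - apply H', Hy. Qed.

Lemma card_ext X Y n : same_set X Y -> has_card X n -> has_card Y n.
Proof. intros HS [l [Hnd [Hl H]]]. exists l; split; auto; split; auto.
  intro x; rewrite <- (HS x); auto. Qed.

Lemma card_disj_union X Y n m : disjoint X Y -> has_card X n -> has_card Y m ->
  has_card (setU X Y) (n + m).
Proof. intros HD [l [Hnd [<- H]]] [l' [Hnd' [<- H']]]. exists (l ++ l'). split; [|split].
 - apply NoDup_app; auto. intros x Hx Hx'. apply (HD x). split; [apply H|apply H']; auto.
 - apply length_app.
 - intro x. rewrite in_app_iff. unfold setU. rewrite H, H'. tauto.
Qed.

Lemma incl_excl X Y nx ny nu ni : has_card X nx -> has_card Y ny ->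
  has_card (setU X Y) nu -> has_card (setI X Y) ni -> nu + ni = nx + ny.
Proof.
  intros Hx Hy Hu Hi.
  destruct (finite_sub (fun x => Y x /\ ~ X x) Y) as [d Hd]; [exists ny; auto| intros x []; auto|].
  assert (nu = nx + d).
  { eapply card_unique; [exact Hu|]. apply card_ext with (setU X (fun x => Y x /\ ~ X x)).
    - intro x; unfold setU; split; [intros [|[]]; auto| intros [|]; [left|]; auto].
      destruct (classic (X x)); auto.
    - apply card_disj_union; auto. intros x [? []]; auto. }
  assert (ny = ni + d).
  { eapply card_unique; [exact Hy|]. apply card_ext with (setU (setI X Y) (fun x => Y x /\ ~ X x)).
    - intro x; unfold setU, setI; split; [intros [[]|[]]; auto| intros Hx0].
      destruct (classic (X x)); auto.
    - apply card_disj_union; auto. intros x [[] []]; auto. }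
  lia.
Qed.

Lemma nat_min (P : nat -> Prop) : (exists n, P n) -> exists n, P n /\ forall m, P m -> n <= m.
Proof.
  intros [n Hn]. apply NNPP; intro Hno.
  assert (H : forall k, forall m, m <= k -> ~ P m).
  { induction k; intros m Hm HP; apply Hno; exists m; split; auto; intros m' Hm'.
    - lia.
    - destruct (PeanoNat.Nat.le_gt_cases m m'); auto. exfalso; apply (IHk m'); auto; lia. }
  apply (H n n); auto.
Qed.

Context (E : V -> V -> Prop).

Lemma image_finite X : locally_finite E -> finite_set X -> finite_set (image E X).
Proof. intros LF [n [l [_ [_ H]]]].
  assert (Hl : forall l0 : list V, finite_set (fun y => exists x, In x l0 /\ E x y)).
  { induction l0 as [|a l0 IH].
    - apply (covered_finite _ []). intros y [x [[] _]].
    - apply finite_sub with (setU (fun y => E a y) (fun y => exists x, In x l0 /\ E x y)).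
      + apply finite_union; auto. apply LF.
      + intros y [x [[<-|Hx] Hxy]]; [left; auto| right; eauto]. }
  apply finite_sub with (fun y => exists x, In x l /\ E x y); auto.
  intros y [x [Hx Hxy]]. exists x; split; auto. apply H; auto.
Qed.

Lemma boundary_finite X : locally_finite E -> finite_set X -> finite_set (boundary E X).
Proof. intros LF HX. apply finite_sub with (image E X); [apply image_finite; auto| intros x []; auto]. Qed.

Hypothesis Hrefl : reflexive_rel E.
Hypothesis HLF : locally_finite E.

Lemma card_gamma X n b : has_card X n -> has_card (boundary E X) b -> has_card (image E X) (n + b).
Proof. intros HX HB. apply card_ext with (setU X (boundary E X)).
  - intro y; unfold setU, boundary, image. split.
    + intros [Hy|[Hi _]]; auto. exists y; split; auto.
    + intros Hi. destruct (classic (X y)); [left|right]; auto.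
  - apply card_disj_union; auto. intros y [H1 [_ H2]]; auto.
Qed.

Lemma submod X Y nx ny nu ni bx b_y bu bi :
  has_card X nx -> has_card Y ny -> has_card (setU X Y) nu -> has_card (setI X Y) ni ->
  has_card (boundary E X) bx -> has_card (boundary E Y) b_y ->
  has_card (boundary E (setU X Y)) bu -> has_card (boundary E (setI X Y)) bi ->
  bu + bi <= bx + b_y.
Proof.
  intros Hx Hy Hu Hi Bx By Bu Bi.
  pose proof (incl_excl _ _ _ _ _ _ Hx Hy Hu Hi).
  pose proof (card_gamma _ _ _ Hx Bx) as Gx.
  pose proof (card_gamma _ _ _ Hy By) as Gy.
  pose proof (card_gamma _ _ _ Hu Bu) as Gu.
  pose proof (card_gamma _ _ _ Hi Bi) as Gi.
  destruct (finite_sub (setI (image E X) (image E Y)) (image E X)) as [c Hc];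
    [eexists; eauto| intros z []; auto|].
  assert (Hu' : has_card (setU (image E X) (image E Y)) (nu + bu)).
  { apply card_ext with (image E (setU X Y)); auto.
    intro z; unfold setU, image; split.
    - intros [x [[Hx'|Hx'] He]]; [left|right]; eauto.
    - intros [[x [Hx' He]]|[x [Hx' He]]]; eauto. }
  pose proof (incl_excl _ _ _ _ _ _ Gx Gy Hu' Hc).
  assert (ni + bi <= c).
  { eapply card_le; [|exact Gi|exact Hc]. intros z [x [[H1 H2] He]]; split; exists x; auto. }
  lia.
Qed.

Lemma part1 F1 F2 : weak_fragment E F1 -> weak_fragment E F2 -> nonempty (setI F1 F2) ->
  weak_fragment E (setU F1 F2) /\ weak_fragment E (setI F1 F2).
Proof.
  intros [Hne1 [Hf1 [k1 [Hb1 Hm1]]]] [Hne2 [Hf2 [k2 [Hb2 Hm2]]]] Hne.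
  assert (k1 = k2) by (apply PeanoNat.Nat.le_antisymm; [apply (Hm1 F2 k2) | apply (Hm2 F1 k1)]; auto).
  subst k2.
  assert (Hfu : finite_set (setU F1 F2)) by (apply finite_union; auto).
  assert (Hfi : finite_set (setI F1 F2)) by (apply finite_sub with F1; [auto| intros x []; auto]).
  assert (Hneu : nonempty (setU F1 F2)) by (destruct Hne1 as [x]; exists x; left; auto).
  destruct (boundary_finite _ HLF Hfu) as [bu Hbu].
  destruct (boundary_finite _ HLF Hfi) as [bi Hbi].
  destruct Hf1 as [n1 Hc1], Hf2 as [n2 Hc2].
  destruct Hfu as [nu Hcu], Hfi as [ni Hci].
  pose proof (submod _ _ _ _ _ _ _ _ _ _ Hc1 Hc2 Hcu Hci Hb1 Hb2 Hbu Hbi).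
  assert (k1 <= bu) by (eapply Hm1; [exact Hneu| exists nu; auto| exact Hbu]).
  assert (k1 <= bi) by (eapply Hm1; [exact Hne| exists ni; auto| exact Hbi]).
  split; (split; [auto|split; [eexists; eauto|exists k1; split; auto]]).
  - replace k1 with bu by lia; auto.
  - replace k1 with bi by lia; auto.
Qed.

Lemma atoms_meet A B : weak_atom E A -> weak_atom E B -> nonempty (setI A B) -> same_set A B.
Proof.
  intros [HA [a [Ha HmA]]] [HB [b [Hb HmB]]] Hne.
  destruct (part1 A B HA HB Hne) as [_ HI].
  pose proof HI as [_ [[i Hi] _]].
  assert (a <= i) by (eapply HmA; eauto).
  assert (b <= i) by (eapply HmB; eauto).
  assert (i <= a) by (eapply (card_le (setI A B) A); eauto; intros x []; auto).
  assert (i <= b) by (eapply (card_le (setI A B) B); eauto; intros x []; auto).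
  assert (HiA : has_card A i) by (replace i with a by lia; auto).
  assert (HiB : has_card B i) by (replace i with b by lia; auto).
  intro x; split; intro Hx0.
  - apply (card_eq_sub (setI A B) A i) in Hx0; auto; [destruct Hx0; auto| intros y []; auto].
  - apply (card_eq_sub (setI A B) B i) in Hx0; auto; [destruct Hx0; auto| intros y []; auto].
Qed.

Section Auto.
Variables (f g : V -> V).
Hypothesis Hgf : forall x, g (f x) = x.
Hypothesis Hfg : forall y, f (g y) = y.
Hypothesis Hrel : forall x y, E (f x) y <-> exists z, E x z /\ y = f z.

Lemma card_map X n : has_card X n -> has_card (fun y => X (g y)) n.
Proof.
  intros [l [Hnd [Hl H]]]. exists (map f l). split; [|split].
  - apply Injective_map_NoDup; auto. intros x y Hxy. rewrite <- (Hgf x), <- (Hgf y), Hxy; auto.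
  - rewrite length_map; auto.
  - intro y. rewrite in_map_iff, H. split.
    + intros Hy. exists (g y); auto.
    + intros [x [<- Hx]]. rewrite Hgf; auto.
Qed.

Lemma boundary_map X : same_set (boundary E (fun y => X (g y))) (fun y => boundary E X (g y)).
Proof.
  intro y; unfold boundary, image; split.
  - intros [[x' [Hx' He]] Hn]. split; auto. exists (g x'). split; auto.
    rewrite <- (Hfg x') in He. apply Hrel in He. destruct He as [z [Hz ->]]. rewrite Hgf; auto.
  - intros [[x [Hx He]] Hn]. split; auto. exists (f x). rewrite Hgf. split; auto.
    apply Hrel. exists (g y); auto.
Qed.

Lemma frag_map X : weak_fragment E X -> weak_fragment E (fun y => X (g y)).
Proof.
  intros [[x Hx] [[n Hn] [k [Hk Hm]]]]. split; [exists (f x); rewrite Hgf; auto|].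
  split; [exists n; apply card_map; auto|]. exists k; split; auto.
  apply card_ext with (fun y => boundary E X (g y)).
  - intro y; rewrite (boundary_map X y); tauto.
  - apply card_map; auto.
Qed.

Lemma atom_map X : weak_atom E X -> weak_atom E (fun y => X (g y)).
Proof.
  intros [HF [a [Ha Hm]]]. split; [apply frag_map; auto|]. exists a; split; auto.
  apply card_map; auto.
Qed.
End Auto.

Lemma atom_exists (x0 : V) : exists A, weak_atom E A.
Proof.
  destruct (nat_min (fun m => exists Y, nonempty Y /\ finite_set Y /\ has_card (boundary E Y) m))
    as [k [[Y0 [HY0 [HfY0 HbY0]]] Hk]].
  { assert (Hf : finite_set (fun y => y = x0)) by (apply (covered_finite _ [x0]); intros; left; auto).
    destruct (boundary_finite _ HLF Hf) as [m Hm]. exists m, (fun y => y = x0).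
    split; [exists x0; auto| auto]. }
  assert (HF0 : weak_fragment E Y0).
  { split; auto; split; auto. exists k; split; auto. intros Y m H1 H2 H3. apply Hk; eauto. }
  destruct (nat_min (fun a => exists F, weak_fragment E F /\ has_card F a))
    as [a [[A [HA Ha]] Hm]].
  { destruct HfY0 as [n Hn]. exists n, Y0; auto. }
  exists A. split; auto. exists a; split; auto. intros F f HF Hf. apply Hm; eauto.
Qed.

Lemma sig_eq (A : V -> Prop) x y (p : A x) (q : A y) : x = y -> exist A x p = exist A y q.
Proof. intros ->. f_equal. apply proof_irrelevance. Qed.

End S.

Theorem proposition3p1 (V : Type) (E : V -> V -> Prop) :
  reflexive_rel E -> locally_finite E ->
  (forall F1 F2 : V -> Prop,
      weak_fragment E F1 -> weak_fragment E F2 -> nonempty (setI F1 F2) ->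
      weak_fragment E (setU F1 F2) /\ weak_fragment E (setI F1 F2)) /\
  (forall A B : V -> Prop,
      weak_atom E A -> weak_atom E B -> ~ same_set A B -> disjoint A B) /\
  (point_transitive E ->
     (forall x : V, exists A, weak_atom E A /\ A x) /\
     (forall A B : V -> Prop,
        weak_atom E A -> weak_atom E B -> same_set A B \/ disjoint A B) /\
     (forall A : V -> Prop, weak_atom E A -> point_transitive (induced E A))).
Proof.
  intros Hrefl HLF.
  assert (P2 : forall A B : V -> Prop,
      weak_atom E A -> weak_atom E B -> ~ same_set A B -> disjoint A B).
  { intros A B HA HB Hn x Hx. apply Hn. apply (atoms_meet E); auto. exists x; auto. }
  split; [intros; apply (part1 E); auto|]. split; [auto|].
  intros PT. split; [|split].
  - intros x. destruct (atom_exists E HLF x) as [A HA].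
    pose proof HA as [[[a0 Ha0] _] _].
    destruct (PT a0 x) as [f [[[g [Hgf Hfg]] Hrel] Hfa]].
    exists (fun y => A (g y)). split; [apply (atom_map E f g); auto|].
    rewrite <- Hfa, Hgf; auto.
  - intros A B HA HB. destruct (classic (same_set A B)); auto.
  - intros A HA [a Ha] [b Hb].
    destruct (PT a b) as [f [[[g [Hgf Hfg]] Hrel] Hfa]].
    assert (HS : same_set (fun y => A (g y)) A).
    { apply (atoms_meet E); auto. apply (atom_map E f g); auto. exists b; split; auto.
      rewrite <- Hfa, Hgf; auto. }
    assert (Hf : forall y, A y -> A (f y)) by (intros y Hy; apply HS; rewrite Hgf; auto).
    assert (Hg : forall y, A y -> A (g y)) by (intros y Hy; apply HS; auto).
    exists (fun s => exist A (f (proj1_sig s)) (Hf _ (proj2_sig s))).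
    split.
    + split.
      * exists (fun s => exist A (g (proj1_sig s)) (Hg _ (proj2_sig s))).
        split; intros [y Hy]; apply sig_eq; simpl; auto.
      * intros [x Hx] [y Hy]. unfold induced; simpl. rewrite Hrel. split.
        -- intros [z [Hz ->]]. pose proof (Hg _ Hy) as Hz0; rewrite Hgf in Hz0.
           exists (exist A z Hz0). split; simpl; auto. apply sig_eq; auto.
        -- intros [[z Hz] [Hxz Heq]]. exists z. split; auto.
           apply (f_equal (@proj1_sig _ _)) in Heq. simpl in Heq. auto.
    + apply sig_eq; simpl; auto.
Qed.
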